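(* If an nfc-transducer $\mathcal{T}=(Q,V,\Delta,q_0)$ is consistent with a BPA system $\mathcal{G}=(V,\mathit{Act},\mathcal{R})$, then $\alpha\approx_{q_0}\mathcal{T}_{q_0}(\alpha)$ for every $\alpha\in V^*$.
   Context: A BPA system $\mathcal{G}=(V,\mathit{Act},\mathcal{R})$: finite variables $V$, finite actions $\mathit{Act}$ (possibly containing silent $\tau$), rules $A\xrightarrow{a}\alpha$; LTS $\mathcal{L}_\mathcal{G}$ on $V^*$ with $A\beta\xrightarrow{a}\alpha\beta$ for rules $A\xrightarrow{a}\alpha$. Transducer $\mathcal{T}=(Q,V,\Delta,q_0)$ reading right to left, $q'\xleftarrow{A/\gamma}q$ meaning $\Delta(q,A)=(q',\gamma)$, extended to strings by $q\xleftarrow{\varepsilon/\varepsilon}q$ and composition; $\mathcal{T}_q(\alpha)$ is the output from $q$ on $\alpha$. $q$-normal form: $\varepsilon$ or $A_k\cdots A_1$ with $q_k\xleftarrow{A_k/A_k}\cdots q_1\xleftarrow{A_1/A_1}q$. nfc-transducer: each $\mathcal{T}_q(A)$ is a $q$-normal form and $q'\xleftarrow{A/\gamma}q$ implies $q'\xleftarrow{\gamma/\gamma}q$. Long moves $\alpha\overset{a}{\Rightarrow}_q\beta$: either $a=\tau$ and $\beta=\mathcal{T}_q(\alpha)$, or $\alpha=\alpha_0\xrightarrow{\tau}\cdots\xrightarrow{\tau}\alpha_k\xrightarrow{a}\beta'$ in $\mathcal{L}_\mathcal{G}$ with $\mathcal{T}_q(\alpha_0)=\cdots=\mathcal{T}_q(\alpha_k)$,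 $\mathcal{T}_q(\beta')=\beta$. $\alpha_1\approx_q\alpha_2$ iff they have the same sets of long-move results for each action. Consistency: (1) $A\approx_{q_0}\varepsilon$ if $\mathcal{T}_{q_0}(A)=\varepsilon$; (2) $A\approx_q\mathcal{T}_q(A)$ if $\mathcal{T}_q(A)\ne\varepsilon$; (3) $AC\approx_qC$ if $\mathcal{T}_q(AC)=\mathcal{T}_q(C)=C$. *)

(* Defs.v *)
From mathcomp Require Import all_boot.
Set Implicit Arguments. Unset Strict Implicit. Unset Printing Implicit Defensive.

Section BPA.
Variables (V Act Q : finType).
(* tau = Some t : the action t is the silent action; tau = None : no silent action *)
Variable tau : option Act.
(* the (finite) set of rules A --a--> alpha *)
Variable R : seq (V * Act * seq V).
(* transducer transition function: delta q A = (q', gamma) means q' <-A/gamma- q *)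
Variable delta : Q -> V -> Q * seq V.

Definition bpa_step (x : seq V) (a : Act) (y : seq V) : Prop :=
  exists A alpha beta, x = A :: beta /\ (A, a, alpha) \in R /\ y = alpha ++ beta.

Definition tau_step (x y : seq V) : Prop :=
  exists t, tau = Some t /\ bpa_step x t y.

(* The transducer reads right to left: words are lists whose head is the
   leftmost letter, so the last letter is read first. *)
Fixpoint trun (q : Q) (x : seq V) : Q * seq V :=
  match x with
  | [::] => (q, [::])
  | A :: x' => let (q1, g1) := trun q x' in
               let (q2, g2) := delta q1 A in (q2, g2 ++ g1)
  end.

Definition tout (q : Q) (x : seq V) : seq V := (trun q x).2.

Fixpoint normal_form (q : Q) (x : seq V) : bool :=
  match x with
  | [::] => true
  | A :: x' => normal_form q x' && ((delta (trun q x').1 A).2 == [:: A])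
  end.

Definition nfc : Prop :=
  (forall q A, normal_form q (tout q [:: A])) /\
  (forall q A, trun q (delta q A).2 = delta q A).

Inductive tau_path (q : Q) : seq V -> seq V -> Prop :=
| tau_path_refl x : tau_path q x x
| tau_path_cons x y z : tau_step x y -> tout q y = tout q x ->
                        tau_path q y z -> tau_path q x z.

Definition is_tau (a : Act) : Prop := tau = Some a.

Definition long_move (q : Q) (x : seq V) (a : Act) (y : seq V) : Prop :=
  (is_tau a /\ y = tout q x) \/
  (exists xk y', tau_path q x xk /\ bpa_step xk a y' /\ tout q y' = y).

Definition tequiv (q : Q) (x1 x2 : seq V) : Prop :=
  forall a y, long_move q x1 a y <-> long_move q x2 a y.

Definition consistent (q0 : Q) : Prop :=
  [/\ (forall A, tout q0 [:: A] = [::] -> tequiv q0 [:: A] [::]),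
      (forall q A, tout q [:: A] <> [::] -> tequiv q [:: A] (tout q [:: A]))
    & (forall q A C, tout q [:: A; C] = [:: C] -> tout q [:: C] = [:: C] ->
                     tequiv q [:: A; C] [:: C])].

End BPA.

(* Main.v *)
Require Import Defs.
From mathcomp Require Import all_boot.

Section Proof.
Variables (V Act Q : finType) (tau : option Act) (R : seq (V * Act * seq V))
  (delta : Q -> V -> Q * seq V).

Local Notation trun := (trun delta).
Local Notation tout := (tout delta).
Local Notation bstep := (bpa_step R).
Local Notation tpath := (tau_path tau R delta).
Local Notation lmove := (long_move tau R delta).
Local Notation teq := (tequiv tau R delta).

Lemma trun_cons q A x : trun q (A :: x) =
  ((delta (trun q x).1 A).1, (delta (trun q x).1 A).2 ++ (trun q x).2).
Proof. by rewrite /=; case: (trun q x) => q1 g1 /=; case: (delta q1 A). Qed.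

Lemma trun_cat q x y : trun q (x ++ y) =
  ((trun (trun q y).1 x).1, (trun (trun q y).1 x).2 ++ (trun q y).2).
Proof.
elim: x => [|A x IH]; first by rewrite /=; case: (trun q y).
by rewrite cat_cons !trun_cons IH /= catA.
Qed.

Lemma tout_cat q x y : tout q (x ++ y) = tout (trun q y).1 x ++ tout q y.
Proof. by rewrite /Defs.tout trun_cat. Qed.

Lemma tout1 q A : tout q [:: A] = (delta q A).2.
Proof. by rewrite /Defs.tout trun_cons /= cats0. Qed.

Lemma tout_nil q : tout q [::] = [::].
Proof. by []. Qed.

Lemma tpath_tout q x z : tpath q x z -> tout q z = tout q x.
Proof. by elim=> // x1 y1 z1 _ E _ ->. Qed.

Lemma tpath_trans q x y z : tpath q x y -> tpath q y z -> tpath q x z.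
Proof.
elim=> // x1 y1 z1 S E _ IH H; apply: tau_path_cons S E (IH H).
Qed.

Lemma bstep_cat x a y b : x != [::] -> bstep x a y -> bstep (x ++ b) a (y ++ b).
Proof.
move=> _ [A [al [be [-> [H ->]]]]]; exists A, al, (be ++ b).
by rewrite catA.
Qed.

Lemma bstep_cat_inv x a y b : x != [::] -> bstep (x ++ b) a y ->
  exists y0, y = y0 ++ b /\ bstep x a y0.
Proof.
case: x => // B x _ [A [al [be [[<- Eb] [H ->]]]]].
exists (al ++ x); rewrite -Eb catA; split => //; by exists B, al, x.
Qed.

Lemma cat_injr (x y b : seq V) : x ++ b = y ++ b -> x = y.
Proof.
move=> /(congr1 rev); rewrite !rev_cat => /eqP; rewrite eqseq_cat // => /andP [_ /eqP].
exact: (can_inj revK).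
Qed.

Lemma tpath_pre q b x z : tout (trun q b).1 x != [::] -> tpath q (x ++ b) z ->
  exists z0, [/\ z = z0 ++ b, tpath (trun q b).1 x z0 &
                 tout (trun q b).1 z0 = tout (trun q b).1 x].
Proof.
move=> Hne H; remember (x ++ b) as w eqn:Ew.
elim: H x Ew Hne => [w0|w0 y z0 S E _ IH] x Ew Hne.
  by exists x; split => //; apply: tau_path_refl.
have xne : x != [::] by apply/eqP => X0; move: Hne; rewrite X0.
case: S => t [Ht S]; rewrite Ew in S.
have [y0 [Ey S0]] := @bstep_cat_inv _ _ _ _ xne S.
have E0 : tout (trun q b).1 y0 = tout (trun q b).1 x.
  by move: E; rewrite Ey Ew !tout_cat => /cat_injr.
have [z1 [Ez P1 E1]] := IH y0 Ey ltac:(by rewrite E0).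
exists z1; split => //; last by rewrite E1.
by apply: tau_path_cons P1 => //; exists t.
Qed.

Lemma tpath_lift q b x z0 : tpath (trun q b).1 x z0 -> tpath q (x ++ b) (z0 ++ b).
Proof.
elim=> [w|w y z S E _ IH]; first exact: tau_path_refl.
have wne : w != [::].
  by case: S => t [_ [A [al [be [-> _]]]]].
case: S => t [Ht S]; apply: tau_path_cons IH.
  by exists t; split => //; apply: bstep_cat.
by rewrite !tout_cat E.
Qed.

Lemma lmove_pre q b x a y : tout (trun q b).1 x != [::] ->
  (lmove q (x ++ b) a y <->
   exists y0, lmove (trun q b).1 x a y0 /\ y = y0 ++ tout q b).
Proof.
move=> Hne; split.
  case=> [[Ht ->]|[xk [y' [P [S <-]]]]].
    by exists (tout (trun q b).1 x); split; [left|rewrite tout_cat].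
  have [z0 [Ez P0 E0]] := @tpath_pre q b x xk Hne P.
  have z0ne : z0 != [::] by move: Hne; rewrite -E0; case: z0 {Ez P0 E0}.
  rewrite Ez in S; have [y0 [Ey S0]] := @bstep_cat_inv _ _ _ _ z0ne S.
  exists (tout (trun q b).1 y0); split; last by rewrite Ey tout_cat.
  by right; exists z0, y0.
case=> y0 [[[Ht ->]|[xk [y' [P [S <-]]]]] ->].
  by left; split => //; rewrite tout_cat.
have xkne : xk != [::].
  by case: S => [A [al [be [-> _]]]].
right; exists (xk ++ b), (y' ++ b); split; first exact: tpath_lift.
by split; [apply: bstep_cat|rewrite tout_cat].
Qed.

Lemma teq_pre q b x x' : teq (trun q b).1 x x' ->
  tout (trun q b).1 x != [::] -> tout (trun q b).1 x' != [::] ->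
  teq q (x ++ b) (x' ++ b).
Proof.
move=> H n1 n2 a y.
have P1 := @lmove_pre q b x a y n1; have P2 := @lmove_pre q b x' a y n2.
split=> [/P1 [y0 [Hm Ey]]|/P2 [y0 [Hm Ey]]].
  by apply/P2; exists y0; split => //; apply/H.
by apply/P1; exists y0; split => //; apply/H.
Qed.

Lemma tpath_suf q b b' x z : trun q b = trun q b' -> tpath q (x ++ b) z ->
  (exists z0, z = z0 ++ b /\ tpath q (x ++ b') (z0 ++ b')) \/
  (tpath q (x ++ b') b' /\ tpath q b z).
Proof.
move=> Eb H; remember (x ++ b) as w eqn:Ew.
elim: H x Ew => [w0|w0 y z0 S E P IH] x Ew.
  by left; exists x; split => //; apply: tau_path_refl.
case: x Ew => [|B x] /= Ew.
  by right; split; [apply: tau_path_refl|rewrite -Ew; apply: tau_path_cons P].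
case: (S) => t [Ht [A [al [be [Ew2 [HR Ey]]]]]].
move: Ew2; rewrite Ew => -[EBA Eb2]; rewrite -EBA in HR.
have Ey' : y = (al ++ x) ++ b by rewrite Ey -Eb2 catA.
have Etout : forall u, tout q (u ++ b) = tout q (u ++ b').
  by move=> u; rewrite !tout_cat Eb /Defs.tout Eb.
have Et : tout q ((al ++ x) ++ b') = tout q ((B :: x) ++ b').
  by rewrite -!Etout -Ey' E Ew.
have St : tau_step tau R ((B :: x) ++ b') ((al ++ x) ++ b').
  by exists t; split => //; exists B, al, (x ++ b'); rewrite catA.
case: (IH _ Ey') => [[z1 [Ez P1]]|[P1 P2]].
  by left; exists z1; split => //; apply: tau_path_cons P1.
by right; split => //; apply: tau_path_cons P1.
Qed.

Lemma lmove_suf q b b' x a y : trun q b = trun q b' -> teq q b b' ->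
  lmove q (x ++ b) a y -> lmove q (x ++ b') a y.
Proof.
move=> Eb Hb.
have Etout : forall u, tout q (u ++ b) = tout q (u ++ b').
  by move=> u; rewrite !tout_cat Eb /Defs.tout Eb.
have comb : tpath q (x ++ b') b' -> lmove q b a y -> lmove q (x ++ b') a y.
  move=> P /Hb [[Ht ->]|[xk [y' [P' [S <-]]]]].
    by left; split => //; rewrite (@tpath_tout q _ _ P).
  right; exists xk, y'; split => //; exact: (@tpath_trans q _ _ _ P P').
case=> [[Ht ->]|[xk [y' [P [S Ey0]]]]]; first by left; rewrite Etout.
case: (@tpath_suf q b b' x xk Eb P) => [[z0 [Ez P0]]|[P1 P2]].
  case: z0 Ez P0 => [|B z0] Ez P0.
    by apply: comb P0 _; right; exists b, y'; rewrite Ez in S; split => //; apply: tau_path_refl.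
  rewrite Ez in S; have [y0 [Ey S0]] := @bstep_cat_inv _ _ _ _ (isT : B :: z0 != [::]) S.
  right; exists ((B :: z0) ++ b'), (y0 ++ b'); split => //; split.
    exact: bstep_cat.
  by rewrite -Ey0 Ey Etout.
by apply: comb P1 _; right; exists xk, y'.
Qed.

Lemma teq_suf q b b' x : trun q b = trun q b' -> teq q b b' ->
  teq q (x ++ b) (x ++ b').
Proof.
move=> Eb Hb a y; split; apply: lmove_suf => //.
by move=> a0 y0; split; move/Hb.
Qed.

Lemma teq_trans q x y z : teq q x y -> teq q y z -> teq q x z.
Proof.
move=> H1 H2 a w; split => H.
  by apply/H2; apply/H1.
by apply/H1; apply/H2.
Qed.

Lemma teq_refl q x : teq q x x.
Proof. by move=> a w. Qed.

Lemma nf_cat q x y : normal_form delta q (x ++ y) =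
  normal_form delta q y && normal_form delta (trun q y).1 x.
Proof.
elim: x => [|A x IH] /=; first by rewrite andbT.
by rewrite IH trun_cat andbA.
Qed.

Lemma tout_nf q x : nfc delta ->
  normal_form delta q (tout q x) /\ trun q (tout q x) = trun q x.
Proof.
case=> N1 N2; elim: x => [|A x [IH1 IH2]] //.
rewrite /Defs.tout trun_cons /= trun_cat nf_cat -/(Defs.tout delta q x) IH1 IH2 /=.
have := N1 (trun q x).1 A; rewrite tout1 => ->.
by rewrite N2.
Qed.

End Proof.

Theorem mainTheorem6 (V Act Q : finType) (tau : option Act)
    (R : seq (V * Act * seq V)) (delta : Q -> V -> Q * seq V) (q0 : Q) :
  nfc delta -> consistent tau R delta q0 ->
  forall alpha : seq V, tequiv tau R delta q0 alpha (tout delta q0 alpha).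
Proof.
move=> Hn [C1 C2 C3]; elim=> [|A b IH]; first exact: teq_refl.
have [NF Etr] := @tout_nf V Q delta q0 b Hn.
set N := tout delta q0 b in NF Etr IH.
set p := (trun delta q0 b).1.
have S1 : tequiv tau R delta q0 ([:: A] ++ b) ([:: A] ++ N).
  by apply: teq_suf => //; rewrite Etr.
apply: teq_trans S1 _.
have -> : tout delta q0 (A :: b) = (delta p A).2 ++ N.
  by rewrite /Defs.tout trun_cons.
have Ep : (trun delta q0 N).1 = p by rewrite Etr.
case Eg: (delta p A).2 => [|g1 g] /=.
  case EN: N NF Etr Ep => [|C N'] NF Etr Ep.
    have Pq : p = q0 by rewrite -Ep.
    apply: C1; rewrite tout1 -Pq; exact: Eg.
  move: NF => /= /andP [_ /eqP HC].
  move: Ep; rewrite trun_cons /= => Ep.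
  set p' := (trun delta q0 N').1 in HC Ep.
  have T1 : tout delta p' [:: C] = [:: C] by rewrite tout1.
  have T2 : tout delta p' [:: A; C] = [:: C].
    by rewrite -cat1s tout_cat tout1 T1 trun_cons /= Ep Eg.
  have := C3 _ _ _ T2 T1 => H.
  have := @teq_pre V Act Q tau R delta q0 N' [:: A; C] [:: C] H.
  by rewrite T1 T2 /=; apply.
have Hg : tout delta p [:: A] <> [::] by rewrite tout1 Eg.
have := C2 p A Hg; rewrite tout1 Eg => H.
have Tg : tout delta p (g1 :: g) = g1 :: g.
  by rewrite -Eg /Defs.tout (proj2 Hn).
have := @teq_pre V Act Q tau R delta q0 N [:: A] (g1 :: g).
rewrite Ep tout1 Eg Tg; apply => //.
Qed.
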